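(* Let $M$ be a unit speed curve $\gamma: I\to\mathbb{R}^3$ with arc-length parameter $s$, curvature $\kappa(s) \neq 0$ and torsion $\tau(s)$, and put $\varphi(s) = \int_0^s \tau(t)\,dt + \varphi_0$ for a constant $\varphi_0$. Let $K$ be a curve $\beta$, parametrized by the same arc-length parameter $s$, with $\beta''(s) = \overline{\kappa}(s)\gamma'(s)$, whose curvature and torsion are $$\overline{\kappa}(s) = \kappa(s)\cos\varphi(s), \qquad \overline{\tau}(s) = \kappa(s)\sin\varphi(s).$$ Let $u,w$ be functions on $I$, not simultaneously zero, and let $\lambda$ be a nonzero real constant. Then the curvatures of $K$ satisfy $u\overline{\kappa} - w\overline{\tau} = \lambda(\overline{\kappa}^2+\overline{\tau}^2)$ (the $V$-Mannheim condition for $K$) if and only if $$\kappa(s) = F(s)\cos\big(\varphi(s)+\phi(s)\big),$$ where $F(s) = \frac{\sqrt{u^2+w^2}}{\lambda}$, $\cos\phi(s) = \frac{u}{\sqrt{u^2+w^2}}$ and $\sin\phi(s) = \frac{w}{\sqrt{u^2+w^2}}$.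
   Context: For a unit vector field $V = uT+vN+wB$ along a curve with curvature $\kappa$ and torsion $\tau$, the paper characterizes $V$-Mannheim curves by the relation $u\kappa - w\tau = \lambda(\kappa^2+\tau^2)$; here this relation is imposed on the curvatures $\overline{\kappa},\overline{\tau}$ of $K$. *)

(* Defs.v *)
From Stdlib Require Import Reals Lra.
From Coquelicot Require Import Coquelicot.
Open Scope R_scope.

Definition phi_of (tau : R -> R) (phi0 : R) (s : R) : R := RInt tau 0 s + phi0.

Definition kbar (kappa tau : R -> R) (phi0 : R) (s : R) : R :=
  kappa s * cos (phi_of tau phi0 s).
Definition tbar (kappa tau : R -> R) (phi0 : R) (s : R) : R :=
  kappa s * sin (phi_of tau phi0 s).

Definition VMannheim_cond (u w : R -> R) (lam : R) (k t : R -> R) (s : R) : Prop :=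
  u s * k s - w s * t s = lam * (k s ^ 2 + t s ^ 2).

Definition Ffun (u w : R -> R) (lam : R) (s : R) : R :=
  sqrt (u s ^ 2 + w s ^ 2) / lam.

(* Main.v *)
Require Import Defs.
From Stdlib Require Import Reals Lra.
From Coquelicot Require Import Coquelicot.
Open Scope R_scope.

Lemma key (k c sn u w lam r : R) : k <> 0 -> lam <> 0 -> r <> 0 ->
  c ^ 2 + sn ^ 2 = 1 ->
  (u * (k * c) - w * (k * sn) = lam * ((k * c) ^ 2 + (k * sn) ^ 2) <->
   k = r / lam * (c * (u / r) - sn * (w / r))).
Proof.
  intros Hk Hl Hr H1.
  assert (E : r / lam * (c * (u / r) - sn * (w / r)) = (u * c - w * sn) / lam)
    by (field; auto).
  rewrite E.
  assert (E2 : lam * ((k * c) ^ 2 + (k * sn) ^ 2) = k * (lam * k)).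
  { replace ((k * c) ^ 2 + (k * sn) ^ 2) with (k^2 * (c^2 + sn^2)) by ring.
    rewrite H1. ring. }
  rewrite E2.
  split; intro H.
  - assert (H3 : u * c - w * sn = lam * k).
    { apply Rmult_eq_reg_l with k; auto. rewrite <- H. ring. }
    rewrite H3. field; auto.
  - replace (u * (k * c) - w * (k * sn)) with (k * (u * c - w * sn)) by ring.
    assert (H4 : u * c - w * sn = lam * k) by (rewrite H; field; auto).
    rewrite H4. ring.
Qed.

Theorem mainTheorem4
  (I : R -> Prop) (kappa tau : R -> R) (phi0 : R)
  (u w : R -> R) (lam : R) (phis : R -> R)
  (Hkappa : forall s, I s -> kappa s <> 0)
  (Huw : forall s, I s -> u s ^ 2 + w s ^ 2 <> 0)
  (Hlam : lam <> 0)
  (Hcos : forall s, I s -> cos (phis s) = u s / sqrt (u s ^ 2 + w s ^ 2))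
  (Hsin : forall s, I s -> sin (phis s) = w s / sqrt (u s ^ 2 + w s ^ 2)) :
  (forall s, I s ->
     VMannheim_cond u w lam (kbar kappa tau phi0) (tbar kappa tau phi0) s)
  <->
  (forall s, I s ->
     kappa s = Ffun u w lam s * cos (phi_of tau phi0 s + phis s)).
Proof.
  assert (G : forall s, I s ->
    (VMannheim_cond u w lam (kbar kappa tau phi0) (tbar kappa tau phi0) s <->
     kappa s = Ffun u w lam s * cos (phi_of tau phi0 s + phis s))).
  { intros s Hs.
    unfold VMannheim_cond, kbar, tbar, Ffun.
    rewrite cos_plus, (Hcos s Hs), (Hsin s Hs).
    apply key; auto.
    - intro H0. apply (Huw s Hs).
      assert (Hp : 0 <= u s ^ 2 + w s ^ 2) by nra.
      rewrite <- (sqrt_sqrt _ Hp), H0. ring.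
    - rewrite <- (sin2_cos2 (phi_of tau phi0 s)). unfold Rsqr. ring. }
  split; intros H s Hs; apply (G s Hs); auto.
Qed.
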